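(* For every integer $b\geq 2$ there exist graphs $G$ and $H$ such that $\rho(G\square H)-\rho(G)\rho(H)=b$.
   Context: All graphs are finite and simple. A set $P\subseteq V(G)$ is a packing of $G$ if $N[u]\cap N[v]=\emptyset$ for all distinct $u,v\in P$, where $N[u]$ is the closed neighborhood of $u$; the packing number $\rho(G)$ is the maximum cardinality of a packing of $G$. The Cartesian product $G\square H$ has vertex set $V(G)\times V(H)$, with $(g,h)$ adjacent to $(g',h')$ iff ($gg'\in E(G)$ and $h=h'$) or ($g=g'$ and $hh'\in E(H)$). *)

(* Defs.v *)
From mathcomp Require Import all_boot all_order all_algebra.
Set Implicit Arguments. Unset Strict Implicit. Unset Printing Implicit Defensive.

Definition simple_graph (T : finType) (e : rel T) : Prop :=
  symmetric e /\ irreflexive e.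

Definition cnbhd (T : finType) (e : rel T) (u : T) : {set T} :=
  [set v | (v == u) || e u v].

Definition packing (T : finType) (e : rel T) (P : {set T}) : bool :=
  [forall u in P, forall v in P, (u != v) ==> [disjoint cnbhd e u & cnbhd e v]].

Definition packing_number (T : finType) (e : rel T) : nat :=
  \max_(P : {set T} | packing e P) #|P|.

Definition cart_rel (T1 T2 : finType) (e1 : rel T1) (e2 : rel T2) : rel (T1 * T2) :=
  fun x y => (e1 x.1 y.1 && (x.2 == y.2)) || ((x.1 == y.1) && e2 x.2 y.2).

(* Main.v *)
Require Import Defs.
From mathcomp Require Import all_boot all_order all_algebra.
Set Implicit Arguments. Unset Strict Implicit.

Lemma packE (T : finType) (e : rel T) P u v : packing e P -> u \in P -> v \in P ->
  u != v -> [disjoint cnbhd e u & cnbhd e v].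
Proof.
move=> /forall_inP H Hu Hv; move: (H u Hu) => /forall_inP /(_ v Hv) /implyP; exact.
Qed.

Lemma pack_common (T : finType) (e : rel T) P u v z : packing e P -> u \in P -> v \in P ->
  z \in cnbhd e u -> z \in cnbhd e v -> u = v.
Proof.
move=> HP Hu Hv zu zv; apply/eqP; apply/negPn/negP => Huv.
by rewrite (disjointFr (packE HP Hu Hv Huv) zu) in zv.
Qed.

Definition starg n : rel (option 'I_n) := fun x y => (x == None) != (y == None).
Arguments starg : clear implicits.

Lemma star_simple n : simple_graph (starg n).
Proof. split; first by move=> x y; rewrite /starg eq_sym. by move=> x; rewrite /starg eqxx. Qed.

Lemma rho_star n : packing_number (starg n) = 1%N.
Proof.
apply/eqP; rewrite eqn_leq; apply/andP; split.
  apply/bigmax_leqP => P HP.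
  case: (set_0Vmem P) => [->|[u Hu]]; first by rewrite cards0.
  have: P \subset [set u].
    apply/subsetP => v Hv; rewrite inE; apply/eqP.
    apply: (pack_common (z := None) HP Hv Hu); rewrite inE;
      by [case: (v) | case: (u)].
  by move/subset_leq_card; rewrite cards1.
have HP : packing (starg n) [set None].
  by apply/forall_inP => u; rewrite inE => /eqP ->; apply/forall_inP => v; rewrite inE => /eqP ->; rewrite eqxx.
by have := @leq_bigmax_cond _ (packing (starg n)) (fun P => #|P|) _ HP; rewrite cards1.
Qed.

Section Prod.
Variable n : nat.
Local Notation c := (cart_rel (starg n) (starg n)).

Lemma f1 x y : (x, None) \in cnbhd c (x, y).
Proof. by rewrite inE /cart_rel /starg /=; case: x; case: y => * /=; rewrite ?eqxx ?orbT. Qed.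
Lemma f2 x y : (None, y) \in cnbhd c (x, y).
Proof. by rewrite inE /cart_rel /starg /=; case: x; case: y => * /=; rewrite ?eqxx ?orbT. Qed.
Lemma f3 x : (x, None) \in cnbhd c (None, None).
Proof. by rewrite inE /cart_rel /starg /=; case: x => * /=; rewrite ?eqxx ?orbT. Qed.


Lemma rho_prod_le P : (0 < n)%N -> packing c P -> (#|P| <= n)%N.
Proof.
move=> n0 HP.
have inj1 : {in P &, injective (fun u : option 'I_n * option 'I_n => u.1)}.
  move=> [x y] [x' y'] Hu Hv /= E; subst x'.
  exact: (pack_common HP Hu Hv (f1 x y) (f1 x y')).
have inj2 : {in P &, injective (fun u : option 'I_n * option 'I_n => u.2)}.
  move=> [x y] [x' y'] Hu Hv /= E; subst y'.
  exact: (pack_common HP Hu Hv (f2 x y) (f2 x' y)).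
have cardC : #|[set~ (None : option 'I_n)]| = n.
  by rewrite cardsC1 card_option card_ord.
case: (boolP (None \in [set u.1 | u in P])) => H1; last first.
  rewrite -(card_in_imset inj1); apply: (leq_trans _ (eq_leq cardC)); apply: subset_leq_card.
  by apply/subsetP => z Hz; rewrite !inE; apply: contraNneq H1 => <-.
case: (boolP (None \in [set u.2 | u in P])) => H2; last first.
  rewrite -(card_in_imset inj2); apply: (leq_trans _ (eq_leq cardC)); apply: subset_leq_card.
  by apply/subsetP => z Hz; rewrite !inE; apply: contraNneq H2 => <-.
case/imsetP: H1 => [[x1 y1] Hu /= E1]; subst x1.
case/imsetP: H2 => [[x2 y2] Hv /= E2]; subst y2.
have E := pack_common HP Hu Hv (f1 None y1) (f2 x2 None).
case: E => E1 E2; subst x2 y1.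
have: P \subset [set (None, None)].
  apply/subsetP => [[x y] Hw]; rewrite inE; apply/eqP.
  exact: (pack_common HP Hw Hu (f1 x y) (f3 x)).
by move/subset_leq_card; rewrite cards1 => H; exact: leq_trans H n0.
Qed.

Lemma rho_prod_ge : packing c [set (Some i, Some i) | i : 'I_n].
Proof.
apply/forall_inP => u /imsetP [i _ ->]; apply/forall_inP => v /imsetP [j _ ->].
apply/implyP => Hij.
have ne : i != j by apply: contraNneq Hij => ->.
apply/pred0P => [[a b]] /=.
rewrite !inE /cart_rel /starg /=.
case: a => [a|]; case: b => [b|] //=; rewrite ?eqxx ?andbT ?andbF ?orbF /=;
  rewrite ?xpair_eqE /=; do ![case: eqP => //= ?]; repeat match goal with H : Some _ = Some _ |- _ => injection H as H end; subst; by rewrite eqxx in ne.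
Qed.

End Prod.

Lemma rho_prod n : (0 < n)%N -> packing_number (cart_rel (starg n) (starg n)) = n.
Proof.
move=> n0; apply/eqP; rewrite eqn_leq; apply/andP; split.
  by apply/bigmax_leqP => P HP; exact: rho_prod_le.
have := @leq_bigmax_cond _ (packing (cart_rel (starg n) (starg n))) (fun P => #|P|) _ (rho_prod_ge n).
rewrite card_imset ?card_ord //.
by move=> i j [].
Qed.

Theorem mainTheorem1 (b : nat) (hb : (2 <= b)%N) :
  exists (T1 T2 : finType) (e1 : rel T1) (e2 : rel T2),
    simple_graph e1 /\ simple_graph e2 /\
    ((Posz (packing_number (cart_rel e1 e2)))
      - (Posz (packing_number e1) * Posz (packing_number e2)) = Posz b)%R.
Proof.
exists (option 'I_b.+1), (option 'I_b.+1), (starg b.+1), (starg b.+1).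
split; first exact: star_simple.
split; first exact: star_simple.
rewrite rho_prod // !rho_star.
by rewrite GRing.mul1r -[b.+1]addn1 PoszD GRing.addrK.
Qed.
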